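(* If $G$ is a connected graph with $n$ vertices and $k>0$ basis forced vertices, then $k\leq n-\dim(G)-1$. Moreover, $k\leq \frac{n-1}{2}$.
   Context: All graphs are finite and simple. For vertices $u,v$ of a connected graph $G$, $d(u,v)$ is the length of a shortest $u$–$v$ path. A set $R\subseteq V(G)$ is a resolving set if for all distinct $x,y\in V(G)$ there is $r\in R$ with $d(r,x)\neq d(r,y)$. The metric dimension $\dim(G)$ is the minimum cardinality of a resolving set, and a resolving set of cardinality $\dim(G)$ is a metric basis. A vertex is a basis forced vertex if it belongs to every metric basis of $G$. *)

(* Defs.v *)
From mathcomp Require Import all_boot.
Set Implicit Arguments. Unset Strict Implicit. Unset Printing Implicit Defensive.

Definition simple_graph (T : finType) (e : rel T) : Prop :=
  symmetric e /\ irreflexive e.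

Definition connected_graph (T : finType) (e : rel T) : Prop :=
  forall u v : T, connect e u v.

Definition walk_len (T : finType) (e : rel T) (u v : T) (n : nat) : bool :=
  [exists p : n.-tuple T, path e u p && (last u p == v)].

(* d(u,v): least n with a u-v walk of length n (a shortest walk is a path,
   so this is the shortest-path distance); searched over 0..#|T|-1, which
   suffices in a connected graph. *)
Definition dist (T : finType) (e : rel T) (u v : T) : nat :=
  find (walk_len e u v) (iota 0 #|T|).

Definition resolving (T : finType) (e : rel T) (R : {set T}) : bool :=
  [forall x : T, forall y : T,
     (x != y) ==> [exists r in R, dist e r x != dist e r y]].

Definition metric_dim (T : finType) (e : rel T) : nat :=
  \big[minn/#|T|]_(R : {set T} | resolving e R) #|R|.

Definition metric_basis (T : finType) (e : rel T) (R : {set T}) : bool :=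
  resolving e R && (#|R| == metric_dim e).

Definition basis_forced (T : finType) (e : rel T) (v : T) : bool :=
  [forall R : {set T}, metric_basis e R ==> (v \in R)].

Definition forced_set (T : finType) (e : rel T) : {set T} :=
  [set v | basis_forced e v].

(* Main.v *)
Require Import Defs.
From mathcomp Require Import all_boot zify.
Set Implicit Arguments. Unset Strict Implicit.
Section S.
Variables (T : finType) (e : rel T).

Lemma dist_le u v : dist e u v <= #|T|.
Proof. by rewrite /dist; have := find_size (walk_len e u v) (iota 0 #|T|); rewrite size_iota. Qed.

Lemma dist_refl u : dist e u u = 0.
Proof.
rewrite /dist. have hT : 0 < #|T| by apply/card_gt0P; exists u.
case: #|T| hT => // n _ /=.
have -> : walk_len e u u 0 by apply/existsP; exists [tuple]; rewrite /= eqxx.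
by [].
Qed.

Lemma dist0 u v : dist e u v = 0 -> v = u.
Proof.
move=> h. have hT : 0 < #|T| by apply/card_gt0P; exists u.
have hs : has (walk_len e u v) (iota 0 #|T|).
  by rewrite has_find -/(dist e u v) h size_iota.
have := nth_find 0 hs; rewrite -/(dist e u v) h nth_iota //.
case/existsP=> p /andP[_]; rewrite tuple0 /= => /eqP ->; done.
Qed.
Definition agree (R : {set T}) x y := forall r, r \in R -> dist e r x = dist e r y.

Lemma agree_in R x y : agree R x y -> x \in R -> y = x.
Proof. by move=> h xR; apply: (@dist0 x); rewrite -h // dist_refl. Qed.

Lemma nresP R : ~~ resolving e R -> exists x y, x != y /\ agree R x y.
Proof.
case/forallPn=> x /forallPn [y]; rewrite negb_imply => /andP[xy /existsPn h].
exists x, y; split=> // r rR; by move: (h r); rewrite rR /= negbK => /eqP.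
Qed.

Lemma resT : resolving e setT.
Proof.
apply/forallP=> x; apply/forallP=> y; apply/implyP=> xy; apply/existsP; exists x.
rewrite in_setT dist_refl /=; apply/eqP=> h; move/eqP: xy; apply; exact/esym/dist0/esym.
Qed.

Lemma dim_le R : resolving e R -> metric_dim e <= #|R|.
Proof.
move=> hR; rewrite /metric_dim; have := mem_index_enum R.
elim: (index_enum _) => //= a s IH; rewrite big_cons inE => /orP[/eqP<-|/IH h].
  by rewrite hR geq_minl.
by case: ifP => // _; rewrite geq_min h orbT.
Qed.

Lemma basis_ex : exists B, metric_basis e B.
Proof.
pose Rm := [arg min_(R < setT | resolving e R) #|R|].
have [hRm hmin] : resolving e Rm /\ forall R, resolving e R -> #|Rm| <= #|R|.
  by rewrite /Rm; case: arg_minnP; [exact: resT | move=> R h1 h2; split].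
exists Rm; rewrite /metric_basis hRm /= eqn_leq dim_le // andbT.
rewrite /metric_dim; apply: (big_ind (fun m => #|Rm| <= m)) => //.
- exact: max_card.
- by move=> a b ha hb; rewrite leq_min ha hb.
Qed.
Variable B : {set T}.
Hypothesis hB : metric_basis e B.

Lemma forced_in v : basis_forced e v -> v \in B.
Proof. by move/forallP/(_ B)/implyP; apply. Qed.

Lemma forced_nres1 v : basis_forced e v -> ~~ resolving e (B :\ v).
Proof.
move=> hv; have vB := forced_in hv; apply/negP=> hr.
have := dim_le hr; case/andP: hB => _ /eqP <-.
by rewrite (cardsD1 v B) vB add1n ltnn.
Qed.

Lemma forced_nres2 v w : basis_forced e v -> w \notin B -> ~~ resolving e (w |: (B :\ v)).
Proof.
move=> hv wB; have vB := forced_in hv; apply/negP=> hr.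
have hb : metric_basis e (w |: (B :\ v)).
  rewrite /metric_basis hr /=; case/andP: hB => _ /eqP <-.
  rewrite cardsU1 in_setD1 (negbTE wB) andbF /= (cardsD1 v B) vB.
  by [].
move/forallP: hv => /(_ _) /implyP /(_ hb); rewrite !inE eqxx /=.
by rewrite orbF => /eqP vw; move: wB; rewrite -vw vB.
Qed.

Lemma agree_sub (R R' : {set T}) x y : R' \subset R -> agree R x y -> agree R' x y.
Proof. by move=> /subsetP s h r /s; apply: h. Qed.

Lemma agree_sym (R : {set T}) x y : agree R x y -> agree R y x.
Proof. by move=> h r /h. Qed.

Lemma pair_cases v x y : v \in B -> x != y -> agree (B :\ v) x y ->
  x \in B -> x = v /\ y \notin B.
Proof.
move=> vB xy h xB.
have xv : x = v.
  have [//|xv] := eqVneq x v; exfalso.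
  by move/eqP: xy; apply; apply: esym; apply: (agree_in h); rewrite in_setD1 xv xB.
split=> //; case yB: (y \in B) => //=.
have yv : y = v.
  have [//|yv] := eqVneq y v; exfalso.
  by move/eqP: xy; apply; apply: (agree_in (agree_sym h)); rewrite in_setD1 yv yB.
by rewrite xv yv eqxx in xy.
Qed.

Lemma forced_pair v : basis_forced e v ->
  exists x y, [/\ x \notin B, y \notin B, x != y & agree (B :\ v) x y].
Proof.
move=> hv; have vB := forced_in hv.
have key : forall x y, x != y -> agree (B :\ v) x y ->
    (exists x y, [/\ x \notin B, y \notin B, x != y & agree (B :\ v) x y]) \/
    (exists z, z \notin B /\ agree (B :\ v) v z).
  move=> x y xy h.
  case xB: (x \in B).
    by case: (pair_cases vB xy h xB) => xv yB; subst x; right; exists y.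
  case yB: (y \in B).
    have yx : y != x by rewrite eq_sym.
    by case: (pair_cases vB yx (agree_sym h) yB) => yv xB'; subst y; right; exists x; split=> //; exact: agree_sym.
  by left; exists x, y; rewrite xB yB.
have [x [y [xy h]]] := nresP (forced_nres1 hv).
case: (key x y xy h) => // [[z [zB hz]]].
have [a [b [ab h2]]] := nresP (forced_nres2 hv zB).
have h2' : agree (B :\ v) a b by apply: agree_sub h2; apply: subsetUr.
have fin : forall b, b \notin B -> agree (z |: (B :\ v)) v b ->
    exists x y, [/\ x \notin B, y \notin B, x != y & agree (B :\ v) x y].
  move=> c cB hc; exists z, c; split=> //.
    apply/negP=> /eqP zc; subst c.
    have := hc z; rewrite setU11 dist_refl => /(_ isT) /dist0 vz.
    by move: zB; rewrite -vz vB.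
  by move=> r rB; rewrite -(hz r rB) (hc r) // inE rB orbT.
case aB: (a \in B).
  case: (pair_cases vB ab h2' aB) => av bB; subst a; exact: fin bB h2.
case bB: (b \in B).
  have ba : b != a by rewrite eq_sym.
  case: (pair_cases vB ba (agree_sym h2') bB) => bv aB'; subst b.
  by apply: (fin a); [rewrite aB' | exact: agree_sym h2].
by exists a, b; rewrite aB bB.
Qed.
Definition proj (S : {set T}) (w : T) : {ffun T -> 'I_#|T|.+1} :=
  [ffun b => if b \in S then inord (dist e b w) else ord0].

Definition N (S : {set T}) := #|[set proj S w | w in ~: B]|.

Lemma stepN (S : {set T}) v x y : v \notin S -> x \in ~: B -> y \in ~: B ->
  agree S x y -> dist e v x != dist e v y -> N S < N (v |: S).
Proof.
move=> vS xW yW hxy dxy.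
pose g (f : {ffun T -> 'I_#|T|.+1}) := [ffun b => if b == v then ord0 else f b].
have hg : forall w, g (proj (v |: S) w) = proj S w.
  move=> w; apply/ffunP=> b; rewrite !ffunE in_setU1.
  by case: eqP => [->|_] //=; rewrite (negbTE vS).
rewrite /N; have -> : [set proj S w | w in ~: B] = g @: [set proj (v |: S) w | w in ~: B].
  by rewrite -imset_comp; apply: eq_imset => w /=; rewrite hg.
set A := [set proj (v |: S) w | w in ~: B].
rewrite ltn_neqAle leq_imset_card andbT.
apply/imset_injP => inj.
have : proj (v |: S) x = proj (v |: S) y.
  apply: inj; rewrite ?imset_f //.
  by rewrite !hg; apply/ffunP=> b; rewrite !ffunE; case: ifP => // bS; rewrite hxy.
move/ffunP/(_ v); rewrite !ffunE setU11 => /(congr1 val).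
rewrite /= !inordK ?ltnS ?dist_le // => /eqP; by rewrite (negbTE dxy).
Qed.
Lemma forced_sub : forced_set e \subset B.
Proof. by apply/subsetP=> v; rewrite inE; apply: forced_in. Qed.

Lemma forced_diff v x y : basis_forced e v -> x != y -> agree (B :\ v) x y ->
  dist e v x != dist e v y.
Proof.
move=> hv xy h; case/andP: hB => /forallP /(_ x) /forallP /(_ y) /implyP /(_ xy).
case/existsP=> r /andP[rB dr] _.
have [rv|rv] := eqVneq r v; first by rewrite -rv.
by move: dr; rewrite h ?eqxx // in_setD1 rv rB.
Qed.

Lemma cnt n : forall S : {set T}, #|S| = n -> S \subset forced_set e ->
  0 < #|forced_set e| -> n < N S.
Proof.
elim: n => [|n IH] S cS sS hF.
  case/card_gt0P: hF => v; rewrite inE => hv.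
  have [x [y [xB _ _ _]]] := forced_pair hv.
  apply/card_gt0P; exists (proj S x); apply: imset_f; by rewrite inE.
have : 0 < #|S| by rewrite cS.
case/card_gt0P => v vS.
have hv : basis_forced e v by move/subsetP: sS => /(_ v vS); rewrite inE.
have cS' : #|S :\ v| = n by move: cS; rewrite (cardsD1 v S) vS add1n => -[].
have IH' := IH (S :\ v) cS' (subset_trans (subsetDl S _) sS) hF.
have [x [y [xB yB xy h]]] := forced_pair hv.
have h' : agree (S :\ v) x y.
  apply: agree_sub h; apply: setSD; exact: subset_trans sS forced_sub.
have := stepN (S := S :\ v) (v := v) (x := x) (y := y).
rewrite setD11 setD1K // => /(_ isT); rewrite !inE xB yB => /(_ isT isT h').
move/(_ (forced_diff hv xy h)) => lt.
exact: leq_ltn_trans IH' lt.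
Qed.

Lemma final : 0 < #|forced_set e| ->
  #|forced_set e| < #|T| - #|B| /\ #|forced_set e| <= #|B|.
Proof.
move=> hF; split; last exact: subset_leq_card forced_sub.
have := cnt (erefl _) (subxx _) hF.
move/leq_trans; apply; rewrite -(cardsC B) addKn; exact: leq_imset_card.
Qed.
End S.

Theorem theorem8 (T : finType) (e : rel T) :
  simple_graph e -> connected_graph e ->
  0 < #|forced_set e| ->
  #|forced_set e| <= #|T| - metric_dim e - 1 /\
  (#|forced_set e|).*2 <= #|T| - 1.
Proof.
move=> _ _ hF; have [B hB] := basis_ex e.
have [h1 h2] := final hB hF.
have hd : #|B| = metric_dim e by case/andP: hB => _ /eqP.
rewrite -hd; lia.
Qed.
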